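(* Let $G$ be the mixed graph on nodes $\{a,b,c,d\}$ with directed edges $a\to b$, $a\to c$, $a\to d$ and bidirected edges $a\leftrightarrow b$, $a\leftrightarrow c$, $a\leftrightarrow d$ (and no other edges). Then every $\Sigma\in\mathcal M(G)$ satisfies $$\rho_{bc.a}\cdot\rho_{cd.a}\cdot\rho_{bd.a}\le 0.$$ Moreover, there is a nonempty open subset of the set of positive definite $4\times4$ matrices (e.g. a neighbourhood of the matrix with $\sigma_{aa}=\sigma_{bb}=\sigma_{cc}=\sigma_{dd}=1$, $\sigma_{ab}=\sigma_{ac}=\sigma_{ad}=0$, $\sigma_{bc}=\sigma_{bd}=\sigma_{cd}=1/2$) violating this inequality, so $\mathcal M(G)$ differs from the set of all positive definite $4\times 4$ matrices by a set of positive measure.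
   Context: $\mathcal M(G)=\{(I-\Lambda)^{-T}\Omega(I-\Lambda)^{-1}\}$ where $\Lambda$ ranges over real $4\times4$ matrices with $\Lambda_{vw}\neq 0$ only for directed edges $v\to w$, and $\Omega$ over positive definite matrices with $\Omega_{vw}=0$ for distinct $v,w$ not joined by a bidirected edge. For a covariance matrix $\Sigma=(\sigma_{vw})$, the partial correlation is $\rho_{xy.a}=(\sigma_{xy}\sigma_{aa}-\sigma_{xa}\sigma_{ya})/\sqrt{(\sigma_{xx}\sigma_{aa}-\sigma_{xa}^2)(\sigma_{yy}\sigma_{aa}-\sigma_{ya}^2)}$. *)

(* Defs.v *)
From HB Require Import structures.
From mathcomp Require Import all_boot all_order all_algebra.
Set Implicit Arguments. Unset Strict Implicit. Unset Printing Implicit Defensive.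
Import Order.TTheory GRing.Theory Num.Theory.
Local Open Scope ring_scope.

Definition na : 'I_4 := @Ordinal 4 0 isT.
Definition nb : 'I_4 := @Ordinal 4 1 isT.
Definition nc : 'I_4 := @Ordinal 4 2 isT.
Definition nd : 'I_4 := @Ordinal 4 3 isT.

Definition diredge (v w : 'I_4) : bool :=
  (v == na) && ((w == nb) || (w == nc) || (w == nd)).

Definition biedge (v w : 'I_4) : bool :=
  ((v == na) && ((w == nb) || (w == nc) || (w == nd))) ||
  ((w == na) && ((v == nb) || (v == nc) || (v == nd))).

Definition posdef (R : realFieldType) (n : nat) (A : 'M[R]_n) : Prop :=
  A^T = A /\ forall x : 'cV[R]_n, x != 0 -> 0 < (x^T *m A *m x) 0 0.

Definition inMG (R : realFieldType) (S : 'M[R]_4) : Prop :=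
  exists (L O : 'M[R]_4),
    (forall v w, ~~ diredge v w -> L v w = 0) /\
    posdef O /\
    (forall v w, v != w -> ~~ biedge v w -> O v w = 0) /\
    S = (invmx (1%:M - L))^T *m O *m invmx (1%:M - L).

Definition pcor (R : rcfType) (S : 'M[R]_4) (x y a : 'I_4) : R :=
  (S x y * S a a - S x a * S y a) /
  Num.sqrt ((S x x * S a a - S x a ^+ 2) * (S y y * S a a - S y a ^+ 2)).

Definition Sigma0 (R : rcfType) : 'M[R]_4 :=
  \matrix_(i, j) (if i == j then 1 else if (i == na) || (j == na) then 0 else 2^-1).

(* Main.v *)
Require Import Defs.
From HB Require Import structures.
From mathcomp Require Import all_boot all_order all_algebra.
From mathcomp Require Import ring lra.
Import Order.TTheory GRing.Theory Num.Theory.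
Local Open Scope ring_scope.

Lemma sum4 (R : nmodType) (F : 'I_4 -> R) : \sum_i F i = F na + F nb + F nc + F nd.
Proof.
rewrite !big_ord_recl big_ord0 addr0 !addrA.
by congr (_ + _ + _ + _); congr F; apply: val_inj.
Qed.

Lemma inv1L (R : rcfType) (L : 'M[R]_4) :
  (forall v w, ~~ diredge v w -> L v w = 0) -> invmx (1%:M - L) = 1%:M + L.
Proof.
move=> HL.
have LL : L *m L = 0.
  apply/matrixP => i j; rewrite !mxE sum4.
  rewrite [L i na]HL; last by rewrite /diredge; case: (i == na).
  rewrite [L nb j]HL // [L nc j]HL // [L nd j]HL //.
  by rewrite !(mulr0, mul0r, addr0).
have H : (1%:M - L) *m (1%:M + L) = 1%:M.
  by rewrite mulmxDr mulmx1 mulmxBl mul1mx LL subr0 subrK.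
have [U _] := mulmx1_unit H.
have E : invmx (1%:M - L) *m (1%:M - L) *m (1%:M + L) = 1%:M + L by rewrite (mulVmx U) mul1mx.
by rewrite -E -mulmxA H mulmx1.
Qed.


Lemma num_bc (R : rcfType) (L O : 'M[R]_4) :
  (forall v w, ~~ diredge v w -> L v w = 0) ->
  O^T = O ->
  (forall v w, v != w -> ~~ biedge v w -> O v w = 0) ->
  forall S, S = (1%:M + L)^T *m O *m (1%:M + L) ->
  S nb nc * S na na - S nb na * S nc na = - (O nb na * O nc na).
Proof.
move=> HL HO HB S HS; rewrite HS.
  rewrite !(mxE, sum4) /= ?(HL na na) ?(HL nb na) ?(HL nb nb) ?(HL nb nc) ?(HL nb nd) ?(HL nc na) ?(HL nc nb) ?(HL nc nc) ?(HL nc nd) ?(HL nd na) ?(HL nd nb) ?(HL nd nc) ?(HL nd nd) // ?(HB nb nc) ?(HB nb nd) ?(HB nc nb) ?(HB nc nd) ?(HB nd nb) ?(HB nd nc) //.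
  have s1 : O na nb = O nb na by rewrite -{1}HO mxE.
  have s2 : O na nc = O nc na by rewrite -{1}HO mxE.
  have s3 : O na nd = O nd na by rewrite -{1}HO mxE.
  rewrite s1 s2 s3; ring.
Qed.

Lemma num_cd (R : rcfType) (L O : 'M[R]_4) :
  (forall v w, ~~ diredge v w -> L v w = 0) ->
  O^T = O ->
  (forall v w, v != w -> ~~ biedge v w -> O v w = 0) ->
  forall S, S = (1%:M + L)^T *m O *m (1%:M + L) ->
  S nc nd * S na na - S nc na * S nd na = - (O nc na * O nd na).
Proof.
move=> HL HO HB S HS; rewrite HS.
  rewrite !(mxE, sum4) /= ?(HL na na) ?(HL nb na) ?(HL nb nb) ?(HL nb nc) ?(HL nb nd) ?(HL nc na) ?(HL nc nb) ?(HL nc nc) ?(HL nc nd) ?(HL nd na) ?(HL nd nb) ?(HL nd nc) ?(HL nd nd) // ?(HB nb nc) ?(HB nb nd) ?(HB nc nb) ?(HB nc nd) ?(HB nd nb) ?(HB nd nc) //.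
  have s1 : O na nb = O nb na by rewrite -{1}HO mxE.
  have s2 : O na nc = O nc na by rewrite -{1}HO mxE.
  have s3 : O na nd = O nd na by rewrite -{1}HO mxE.
  rewrite s1 s2 s3; ring.
Qed.

Lemma num_bd (R : rcfType) (L O : 'M[R]_4) :
  (forall v w, ~~ diredge v w -> L v w = 0) ->
  O^T = O ->
  (forall v w, v != w -> ~~ biedge v w -> O v w = 0) ->
  forall S, S = (1%:M + L)^T *m O *m (1%:M + L) ->
  S nb nd * S na na - S nb na * S nd na = - (O nb na * O nd na).
Proof.
move=> HL HO HB S HS; rewrite HS.
  rewrite !(mxE, sum4) /= ?(HL na na) ?(HL nb na) ?(HL nb nb) ?(HL nb nc) ?(HL nb nd) ?(HL nc na) ?(HL nc nb) ?(HL nc nc) ?(HL nc nd) ?(HL nd na) ?(HL nd nb) ?(HL nd nc) ?(HL nd nd) // ?(HB nb nc) ?(HB nb nd) ?(HB nc nb) ?(HB nc nd) ?(HB nd nb) ?(HB nd nc) //.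
  have s1 : O na nb = O nb na by rewrite -{1}HO mxE.
  have s2 : O na nc = O nc na by rewrite -{1}HO mxE.
  have s3 : O na nd = O nd na by rewrite -{1}HO mxE.
  rewrite s1 s2 s3; ring.
Qed.


Lemma sign3 (R : rcfType) (a b c d e f : R) :
  0 <= d -> 0 <= e -> 0 <= f -> a * b * c <= 0 -> a / d * (b / e) * (c / f) <= 0.
Proof.
move=> hd he hf h.
have -> : a / d * (b / e) * (c / f) = (a * b * c) * (d^-1 * e^-1 * f^-1) by ring.
by apply: mulr_le0_ge0 => //; rewrite !mulr_ge0 // invr_ge0.
Qed.

Lemma pcor_pos (R : rcfType) (a b c d e f : R) :
  4/10 < a < 6/10 -> 9/10 < b < 11/10 -> -(1/10) < c < 1/10 -> -(1/10) < d < 1/10 ->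
  9/10 < e < 11/10 -> 9/10 < f < 11/10 ->
  0 < (a * b - c * d) / Num.sqrt ((e * b - c ^+ 2) * (f * b - d ^+ 2)).
Proof.
move=> /andP[a1 a2] /andP[b1 b2] /andP[c1 c2] /andP[d1 d2] /andP[e1 e2] /andP[f1 f2].
have hab : 36/100 < a * b by nra.
have hcd : c * d < 1/100.
  have : `|c * d| < 1/100.
    rewrite normrM; have hc : `|c| < 1/10 by rewrite ltr_norml c1.
    have hd : `|d| < 1/10 by rewrite ltr_norml d1.
    have : `|c| * `|d| <= 1/10 * `|d| by rewrite ler_wpM2r // ltW.
    nra.
  by rewrite ltr_norml => /andP[].
have hc2 : c ^+ 2 < 1/100 by nra.
have hd2 : d ^+ 2 < 1/100 by nra.
have heb : 81/100 < e * b by nra.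
have hfb : 81/100 < f * b by nra.
apply: divr_gt0; last rewrite sqrtr_gt0; nra.
Qed.

Lemma Sigma0_posdef (R : rcfType) : posdef (Sigma0 R).
Proof.
split.
  by apply/matrixP => i j; rewrite !mxE (eq_sym j i) [(j == na) || _]orbC.
move=> x xn0.
have [i Hi] : exists i, x i 0 != 0.
  apply/existsP; apply: contraR xn0 => /existsPn H; apply/eqP/matrixP => i j.
  by rewrite ord1 mxE; move: (H i); rewrite negbK => /eqP.
rewrite !(mxE, sum4) /=.
have hs : 0 < x na 0 ^+ 2 + x nb 0 ^+ 2 + x nc 0 ^+ 2 + x nd 0 ^+ 2.
  have hi : 0 < x i 0 ^+ 2 by rewrite lt_def sqrf_eq0 Hi sqr_ge0.
  have h1 := sqr_ge0 (x na 0); have h2 := sqr_ge0 (x nb 0).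
  have h3 := sqr_ge0 (x nc 0); have h4 := sqr_ge0 (x nd 0).
  case: i Hi hi => [[|[|[|[|k]]]] Hk] //= _ hi.
  - have -> : na = Ordinal Hk by apply: val_inj. lra.
  - have -> : nb = Ordinal Hk by apply: val_inj. lra.
  - have -> : nc = Ordinal Hk by apply: val_inj. lra.
  - have -> : nd = Ordinal Hk by apply: val_inj. lra.
have h := sqr_ge0 (x nb 0 + x nc 0 + x nd 0).
have ha := sqr_ge0 (x na 0).
nra.
Qed.

Theorem proposition2 (R : rcfType) :
  (forall S : 'M[R]_4, inMG S ->
     pcor S nb nc na * pcor S nc nd na * pcor S nb nd na <= 0) /\
  (posdef (Sigma0 R) /\
   exists eps : R, 0 < eps /\
     forall S : 'M[R]_4, posdef S ->
       (forall i j, `|S i j - Sigma0 R i j| < eps) ->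
       0 < pcor S nb nc na * pcor S nc nd na * pcor S nb nd na).
Proof.
split.
  move=> S [L [O [HL [[OT _] [HB HS]]]]].
  rewrite inv1L // in HS.
  rewrite /pcor (@num_bc _ _ _ HL OT HB _ HS) (@num_cd _ _ _ HL OT HB _ HS) (@num_bd _ _ _ HL OT HB _ HS).
  apply: sign3; rewrite ?sqrtr_ge0 //.
  have -> : - (O nb na * O nc na) * - (O nc na * O nd na) * - (O nb na * O nd na)
     = - ((O nb na * O nc na * O nd na) ^+ 2) by ring.
  by rewrite oppr_le0 sqr_ge0.
split; first exact: Sigma0_posdef.
exists (1/10); split; first lra.
move=> S _ H.
  have hnana : 9/10 < S na na < 11/10.
    by move: (H na na); rewrite mxE /= ltr_distl => /andP[? ?]; apply/andP; split; lra.
  have hnbnb : 9/10 < S nb nb < 11/10.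
    by move: (H nb nb); rewrite mxE /= ltr_distl => /andP[? ?]; apply/andP; split; lra.
  have hncnc : 9/10 < S nc nc < 11/10.
    by move: (H nc nc); rewrite mxE /= ltr_distl => /andP[? ?]; apply/andP; split; lra.
  have hndnd : 9/10 < S nd nd < 11/10.
    by move: (H nd nd); rewrite mxE /= ltr_distl => /andP[? ?]; apply/andP; split; lra.
  have hnbna : -(1/10) < S nb na < 1/10.
    by move: (H nb na); rewrite mxE /= ltr_distl => /andP[? ?]; apply/andP; split; lra.
  have hncna : -(1/10) < S nc na < 1/10.
    by move: (H nc na); rewrite mxE /= ltr_distl => /andP[? ?]; apply/andP; split; lra.
  have hndna : -(1/10) < S nd na < 1/10.
    by move: (H nd na); rewrite mxE /= ltr_distl => /andP[? ?]; apply/andP; split; lra.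
  have hnbnc : 4/10 < S nb nc < 6/10.
    by move: (H nb nc); rewrite mxE /= ltr_distl => /andP[? ?]; apply/andP; split; lra.
  have hncnd : 4/10 < S nc nd < 6/10.
    by move: (H nc nd); rewrite mxE /= ltr_distl => /andP[? ?]; apply/andP; split; lra.
  have hnbnd : 4/10 < S nb nd < 6/10.
    by move: (H nb nd); rewrite mxE /= ltr_distl => /andP[? ?]; apply/andP; split; lra.
rewrite /pcor.
apply: mulr_gt0; first apply: mulr_gt0.
- exact: (pcor_pos _ _ _ _ _ _ _ hnbnc hnana hnbna hncna hnbnb hncnc).
- exact: (pcor_pos _ _ _ _ _ _ _ hncnd hnana hncna hndna hncnc hndnd).
- exact: (pcor_pos _ _ _ _ _ _ _ hnbnd hnana hnbna hndna hnbnb hndnd).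
Qed.
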